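(* Let $1<\gamma<2$ and let $A,N,\omega,V$ be real functions of $x$ on an interval, with $A>0$, $N\ge0$, $\omega>0$, $|V|<1$, solving the system $$\frac{A'}{A}=1-A+\frac{2\omega(1+(\gamma-1)V^2)}{1-V^2},\qquad \frac{N'}{N}=-2+A-(2-\gamma)\omega,\qquad \frac{A'}{A}=-\frac{2\gamma NV\omega}{1-V^2},$$ $$(1+NV)\frac{\omega'}{\omega}+\frac{\gamma(N+V)V'}{1-V^2}=\frac{3(2-\gamma)}{2}NV-\frac{2+\gamma}{2}ANV+(2-\gamma)NV\omega,$$ $$(\gamma-1)(N+V)\frac{\omega'}{\omega}+\frac{\gamma(1+NV)V'}{1-V^2}=(2-\gamma)(\gamma-1)N\omega+\frac{7\gamma-6}{2}N+\frac{2-3\gamma}{2}AN,$$ where $'=d/dx$. Then $A$ is monotonically non-decreasing on every subinterval on which $A<1$.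
   Context: This is the system of ordinary differential equations for continuously self-similar spherically symmetric solutions of Einstein's equations with a perfect fluid of equation of state $p=(\gamma-1)\rho$, in the self-similar variable $x=\ln(-r/t)$, where $A=a^2$ (metric function), $N=\alpha/(ae^x)$ (rescaled lapse), $\omega=4\pi r^2a^2\rho$ (rescaled density), and $V$ is the fluid 3-velocity. *)

(* Defs.v *)
From Stdlib Require Import Reals.
From Coquelicot Require Import Coquelicot.
Open Scope R_scope.

Definition in_open_interval (a b : Rbar) (x : R) : Prop :=
  Rbar_lt a x /\ Rbar_lt x b.

(* Main.v *)
Require Import Defs.
From Stdlib Require Import Reals Lra Psatz.
From Coquelicot Require Import Coquelicot.
Open Scope R_scope.

Lemma in_int_between (a b : Rbar) c d z :
  in_open_interval a b c -> in_open_interval a b d -> c <= z <= d ->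
  in_open_interval a b z.
Proof.
  intros [Hc1 Hc2] [Hd1 Hd2] Hz; split.
  - destruct a; simpl in *; auto; lra.
  - destruct b; simpl in *; auto; lra.
Qed.

Theorem lemma5 (gamma : R) (a b : Rbar) (A N w V : R -> R) :
  1 < gamma < 2 ->
  Rbar_lt a b ->
  (forall x, in_open_interval a b x ->
     ex_derive A x /\ ex_derive N x /\ ex_derive w x /\ ex_derive V x) ->
  (forall x, in_open_interval a b x ->
     0 < A x /\ 0 <= N x /\ 0 < w x /\ Rabs (V x) < 1) ->
  (forall x, in_open_interval a b x ->
     Derive A x / A x
       = 1 - A x + 2 * w x * (1 + (gamma - 1) * V x ^ 2) / (1 - V x ^ 2)) ->
  (forall x, in_open_interval a b x ->
     Derive N x = N x * (-2 + A x - (2 - gamma) * w x)) ->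
  (forall x, in_open_interval a b x ->
     Derive A x / A x = - (2 * gamma * N x * V x * w x) / (1 - V x ^ 2)) ->
  (forall x, in_open_interval a b x ->
     (1 + N x * V x) * (Derive w x / w x)
       + gamma * (N x + V x) * Derive V x / (1 - V x ^ 2)
     = 3 * (2 - gamma) / 2 * N x * V x - (2 + gamma) / 2 * A x * N x * V x
       + (2 - gamma) * N x * V x * w x) ->
  (forall x, in_open_interval a b x ->
     (gamma - 1) * (N x + V x) * (Derive w x / w x)
       + gamma * (1 + N x * V x) * Derive V x / (1 - V x ^ 2)
     = (2 - gamma) * (gamma - 1) * N x * w x + (7 * gamma - 6) / 2 * N x
       + (2 - 3 * gamma) / 2 * A x * N x) ->
  forall c d : R,
    in_open_interval a b c -> in_open_interval a b d ->
    (forall x, c <= x <= d -> A x < 1) ->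
    forall x y, c <= x -> x <= y -> y <= d -> A x <= A y.
Proof.
  intros Hg Hab Hder Hpos HA _ _ _ _ c d Hc Hd Hlt x y Hcx Hxy Hyd.
  assert (Hin : forall z, x <= z <= y -> in_open_interval a b z).
  { intros z Hz. apply (in_int_between a b c d z Hc Hd). lra. }
  assert (Hnn : forall z, x <= z <= y -> 0 <= Derive A z).
  { intros z Hz. pose proof (Hin z Hz) as Iz.
    destruct (Hpos z Iz) as [HA0 [_ [Hw _]]].
    destruct (Hpos z Iz) as [_ [_ [_ HV]]].
    pose proof (HA z Iz) as E.
    assert (HA1 : A z < 1) by (apply Hlt; lra).
    assert (HV2 : V z ^ 2 < 1).
    { apply Rabs_def2 in HV. nra. }
    assert (Hq : 0 <= 2 * w z * (1 + (gamma - 1) * V z ^ 2) / (1 - V z ^ 2)).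
    { apply Rmult_le_pos.
      - assert (0 <= V z ^ 2) by nra. apply Rmult_le_pos; [lra|]. assert (0 <= (gamma - 1) * V z ^ 2) by (apply Rmult_le_pos; lra). lra.
      - left; apply Rinv_0_lt_compat; lra. }
    assert (Hr : 0 <= Derive A z / A z) by lra.
    replace (Derive A z) with (A z * (Derive A z / A z)) by (field; lra).
    apply Rmult_le_pos; lra. }
  destruct (MVT_gen A x y (Derive A)) as [z [Hz Ez]].
  - intros z Hz. rewrite Rmin_left in Hz by lra. rewrite Rmax_right in Hz by lra.
    apply Derive_correct. destruct (Hder z) as [H _]; [apply Hin; lra|exact H].
  - intros z Hz. rewrite Rmin_left in Hz by lra. rewrite Rmax_right in Hz by lra.
    apply derivable_continuous_pt, ex_derive_Reals_0. destruct (Hder z) as [H _]; [apply Hin; lra|exact H].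
  - rewrite Rmin_left in Hz by lra. rewrite Rmax_right in Hz by lra.
    pose proof (Hnn z Hz). nra.
Qed.
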